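(* Let $G$ be a complete geometric graph. Then every blocker for $\mathcal{T}_{\leq 3}(G)$ is a spanning tree of $G$.
   Context: A geometric graph is a graph whose vertices are points in the plane in general position (no three collinear) and whose edges are straight segments between pairs of vertices; $G$ is complete if all pairs of vertices are joined. $\mathcal{T}_{\leq k}(G)$ denotes the family of all simple (non-crossing) spanning trees of $G$ of (graph) diameter at most $k$. A subgraph $B$ blocks a family $\mathcal{F}$ of subgraphs if it shares at least one edge with every member of $\mathcal{F}$; a blocker of $\mathcal{F}$ is a subgraph that blocks $\mathcal{F}$ and has the smallest possible number of edges among all subgraphs blocking $\mathcal{F}$. *)

(* Defs.v *)
From mathcomp Require Import all_boot all_order all_algebra.
Set Implicit Arguments. Unset Strict Implicit. Unset Printing Implicit Defensive.
Import Order.TTheory GRing.Theory Num.Theory.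
Local Open Scope ring_scope.

Definition orient (R : numDomainType) (a b c : R * R) : R :=
  (b.1 - a.1) * (c.2 - a.2) - (b.2 - a.2) * (c.1 - a.1).

Definition general_position (R : numDomainType) (n : nat) (p : 'I_n -> R * R) :=
  forall i j k : 'I_n, i != j -> j != k -> i != k -> orient (p i) (p j) (p k) != 0.

Definition complete_edges (n : nat) : {set {set 'I_n}} := [set e : {set 'I_n} | #|e| == 2%N].

Definition on_segment (R : numDomainType) (x a b : R * R) :=
  exists t : R, 0 <= t <= 1 /\
    x = ((1 - t) * a.1 + t * b.1, (1 - t) * a.2 + t * b.2).

Definition segments_meet (R : numDomainType) (a b c d : R * R) :=
  exists x, on_segment x a b /\ on_segment x c d.

(* a geometric (sub)graph with edge set E is simple (non-crossing): no two
   vertex-disjoint edges have intersecting segments (in general position,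
   edges sharing an endpoint meet only at that endpoint) *)
Definition noncrossing (R : numDomainType) (n : nat) (p : 'I_n -> R * R)
    (E : {set {set 'I_n}}) :=
  forall a b c d : 'I_n, [set a; b] \in E -> [set c; d] \in E ->
    [&& a != b, a != c, a != d, b != c, b != d & c != d] ->
    ~ segments_meet (p a) (p b) (p c) (p d).

Definition adj (n : nat) (E : {set {set 'I_n}}) : rel 'I_n :=
  fun x y => [set x; y] \in E.

Definition gconnected (n : nat) (E : {set {set 'I_n}}) :=
  forall x y : 'I_n, connect (adj E) x y.

Definition acyclic (n : nat) (E : {set {set 'I_n}}) :=
  forall s : seq 'I_n, uniq s -> (2 < size s)%N -> ~~ cycle (adj E) s.

Definition spanning_tree (n : nat) (E : {set {set 'I_n}}) :=
  [/\ E \subset complete_edges n, gconnected E & acyclic E].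

Definition diam_le (n : nat) (E : {set {set 'I_n}}) (k : nat) :=
  forall x y : 'I_n, exists s : seq 'I_n,
    [/\ (size s <= k)%N, path (adj E) x s & last x s = y].

Definition T_le (R : numDomainType) (n : nat) (p : 'I_n -> R * R) (k : nat)
    (T : {set {set 'I_n}}) :=
  [/\ spanning_tree T, noncrossing p T & diam_le T k].

Definition blocks (n : nat) (F : {set {set 'I_n}} -> Prop) (B : {set {set 'I_n}}) :=
  forall T, F T -> exists e, e \in B /\ e \in T.

Definition is_blocker (n : nat) (F : {set {set 'I_n}} -> Prop) (B : {set {set 'I_n}}) :=
  [/\ B \subset complete_edges n, blocks F B &
      forall B' : {set {set 'I_n}}, B' \subset complete_edges n -> blocks F B' -> (#|B| <= #|B'|)%N].

(* Main.v *)
Require Import Defs.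
From mathcomp Require Import all_boot all_order all_algebra.
From mathcomp Require Import ring lra zify.
Set Implicit Arguments. Unset Strict Implicit. Unset Printing Implicit Defensive.
Import Order.TTheory GRing.Theory Num.Theory.
Section G.
Local Open Scope ring_scope.

Lemma key_noncross (R : realFieldType) (e : R) (W W' V X Y : R * R) :
  0 < e * orient W W' V -> 0 <= e * orient W W' Y -> 0 < e * orient W Y V ->
  (e * orient W W' X < 0 \/ e * orient W X V < 0) -> W <> Y -> W <> V ->
  ~ segments_meet W X V Y.
Proof.
move=> h1 h2 h3 h4 nWY nWV [z [[a [/andP [a0 a1] za]] [b [/andP[b0 b1] zb]]]].
have E1 : e * orient W W' z = a * (e * orient W W' X).
  by rewrite za /orient /=; ring.
have E1' : e * orient W W' z = (1 - b) * (e * orient W W' V) + b * (e * orient W W' Y).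
  by rewrite zb /orient /=; ring.
have E2 : e * orient W z V = a * (e * orient W X V).
  by rewrite za /orient /=; ring.
have E2' : e * orient W z V = b * (e * orient W Y V).
  by rewrite zb /orient /=; ring.
have zW : a = 0 -> z = W.
  move=> ha; rewrite za ha subr0 !mul1r !mul0r !addr0; by rewrite -surjective_pairing.
case: h4 => hx.
- move: E1'; rewrite E1 => E.
  have [ha hb] : a = 0 /\ b = 1 by split; nra.
  apply: nWY; rewrite -(zW ha) zb hb subrr !mul0r !add0r !mul1r; by rewrite -surjective_pairing.
- move: E2'; rewrite E2 => E.
  have [ha hb] : a = 0 /\ b = 0 by split; nra.
  apply: nWV; rewrite -(zW ha) zb hb subr0 !mul0r !addr0 !mul1r; by rewrite -surjective_pairing.
Qed.

End G.
Lemma conn_cycle_card n (E : {set {set 'I_n}}) (s : seq 'I_n) :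
  gconnected E -> uniq s -> (2 < size s)%N -> cycle (adj E) s -> (n <= #|E|)%N.
Proof.
move=> hc us ss cs.
case: s us ss cs => [|r s0] // us ss cs.
have reach_ex : forall x, exists k, [exists t : k.-tuple 'I_n, path (adj E) x t && (last x t == r)].
  move=> x; have /connectP [p pp lp] := hc x r; exists (size p); apply/existsP.
  by exists (in_tuple p); rewrite pp -lp eqxx.
pose d x := ex_minn (reach_ex x).
have dP : forall x, [exists t : (d x).-tuple 'I_n, path (adj E) x t && (last x t == r)] /\
    forall k, [exists t : k.-tuple 'I_n, path (adj E) x t && (last x t == r)] -> (d x <= k)%N.
  by move=> x; rewrite /d; case: ex_minnP.
have par_ex : forall x, x != r -> exists y, adj E x y && (d y < d x)%N.
  move=> x xr; have [/existsP [t /andP [pt lt]] _] := dP x.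
  move: pt lt; have st := size_tuple t; case: (tval t) st => [|y t'] st /=.
    by move=> _ /eqP xr'; rewrite xr' eqxx in xr.
  case/andP=> axy pt' lt'; exists y; rewrite axy /=.
  have : (d y <= size t')%N.
    by apply: (dP y).2; apply/existsP; exists (in_tuple t'); rewrite pt' lt'.
  by rewrite -st.
pose par x := odflt x [pick y | adj E x y && (d y < d x)%N].
have parP : forall x, x != r -> adj E x (par x) /\ (d (par x) < d x)%N.
  move=> x xr; rewrite /par; case: pickP => [y /andP[] //|] /= H.
  by have [y hy] := par_ex x xr; rewrite H in hy.
pose f x := [set x; par x].
have finj : {in [set~ r] &, injective f}.
  move=> x y; rewrite !in_setC1 => xr yr fxy.
  have [_ dx] := parP x xr; have [_ dy] := parP y yr.
  have : x \in f y by rewrite -fxy set21.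
  rewrite in_set2 => /orP[/eqP //|/eqP xp].
  have : y \in f x by rewrite fxy set21.
  rewrite in_set2 => /orP[/eqP -> //|/eqP yp].
  rewrite -xp in dy; rewrite -yp in dx.
  by have := ltn_trans dx dy; rewrite ltnn.
have fsub : f @: [set~ r] \subset E.
  apply/subsetP => e /imsetP [x xr ->].
  rewrite in_setC1 in xr; by have [a _] := parP x xr.
have cardf : #|f @: [set~ r]| = n.-1 by rewrite card_in_imset // cardsC1 card_ord.
have [z zin zmax] : extremum_spec geq (fun i => i \in r :: s0) d [arg max_(i > r in r :: s0) d i].
  by apply: arg_maxnP; rewrite mem_head.
case: (rot_to zin) => k s' hs'.
have cyc' : cycle (adj E) (z :: s') by rewrite -hs' rot_cycle.
have uniq' : uniq (z :: s') by rewrite -hs' rot_uniq.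
have size' : (2 < size (z :: s'))%N by rewrite -hs' size_rot.
have mem' : forall i, i \in z :: s' -> (d i <= d z)%N.
  by move=> i; rewrite -hs' mem_rot => /zmax.
case: s' cyc' uniq' size' mem' {hs'} => [|a q] //.
case/lastP: q => [|q' b] // cyc' uniq' size' mem'.
move: cyc'; rewrite /= rcons_path => /andP [aza /andP [_ abz]].
rewrite last_rcons in abz.
have hb : [set z; b] \in E by rewrite setUC.
have nza : z != a by move: uniq' => /= /andP [/negP H _]; apply/eqP => za; apply: H; rewrite -za mem_head.
have nzb : z != b.
  by move: uniq' => /= /andP [/negP H _]; apply/eqP => zb; apply: H; rewrite -zb in_cons mem_rcons mem_head orbT.
have nab : a != b.
  move: uniq' => /= /and3P [_ /negP H _]; apply/eqP => ab; apply: H; by rewrite ab mem_rcons mem_head.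
have imgP : forall c, (d c <= d z)%N -> z != c -> [set z; c] \in f @: [set~ r] -> [set z; c] = f z.
  move=> c dc zc /imsetP [u ur fu].
  rewrite in_setC1 in ur.
  have : u \in [set z; c] by rewrite fu set21.
  rewrite in_set2 => /orP [/eqP uz|/eqP uc]; first by rewrite fu uz.
  have : z \in f u by rewrite -fu set21.
  rewrite in_set2 => /orP [/eqP zu|/eqP zp]; first by rewrite zu uc eqxx in zc.
  have [_ dd] := parP u ur; rewrite -zp uc in dd.
  by have := leq_trans dd dc; rewrite ltnn.
have [e eE enot] : exists2 e, e \in E & e \notin f @: [set~ r].
  case ia : ([set z; a] \in f @: [set~ r]); last by exists [set z; a]; rewrite ?ia.
  case ib : ([set z; b] \in f @: [set~ r]); last by exists [set z; b]; rewrite ?ib.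
  have ha := imgP a (mem' a ltac:(by rewrite in_cons mem_head orbT)) nza ia.
  have hb' := imgP b (mem' b ltac:(by rewrite !in_cons mem_rcons mem_head !orbT)) nzb ib.
  have : a \in [set z; b] by rewrite hb' -ha set22.
  by rewrite in_set2 (negbTE nab) eq_sym (negbTE nza).
have : e |: f @: [set~ r] \subset E by rewrite subUset sub1set eE fsub.
move/subset_leq_card; rewrite cardsU1 enot cardf /=; apply: leq_trans.
by rewrite add1n prednK // (leq_ltn_trans (leq0n r) (ltn_ord r)).
Qed.

Lemma tree_of_conn n (E : {set {set 'I_n}}) :
  gconnected E -> (#|E| < n)%N -> acyclic E.
Proof.
move=> hc hE s us ss; apply/negP => cs.
by have := conn_cycle_card hc us ss cs; rewrite leqNgt hE.
Qed.
Lemma adj_sym n (E : {set {set 'I_n}}) : symmetric (adj E).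
Proof. by move=> x y; rewrite /adj setUC. Qed.

Lemma conn_sym n (E : {set {set 'I_n}}) x y : connect (adj E) x y = connect (adj E) y x.
Proof. exact: (sym_connect_sym (@adj_sym n E)). Qed.

Lemma hub_conn n (E : {set {set 'I_n}}) (c : 'I_n) :
  (forall x, connect (adj E) c x) -> gconnected E.
Proof. by move=> h x y; apply: connect_trans (h y); rewrite conn_sym. Qed.

Lemma step1 n (E : {set {set 'I_n}}) a b : a = b \/ adj E a b ->
  exists s, [/\ (size s <= 1)%N, path (adj E) a s & last a s = b].
Proof. by case=> [<-|h]; [exists [::] | exists [:: b]; rewrite /= h]. Qed.

Lemma step3 n (E : {set {set 'I_n}}) a b c d :
  a = b \/ adj E a b -> b = c \/ adj E b c -> c = d \/ adj E c d ->
  exists s, [/\ (size s <= 3)%N, path (adj E) a s & last a s = d].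
Proof.
move=> /step1 [s1 [z1 p1 l1]] /step1 [s2 [z2 p2 l2]] /step1 [s3 [z3 p3 l3]].
exists (s1 ++ s2 ++ s3); rewrite !cat_path !last_cat l1 p1 p2 l2 p3 l3; split => //.
by rewrite !size_cat; apply: leq_trans (leq_add z1 (leq_add z2 z3)) _.
Qed.

Lemma set2_eq (T : finType) (a b c d : T) : [set a; b] = [set c; d] ->
  (a = c /\ b = d) \/ (a = d /\ b = c).
Proof.
move=> h.
have : a \in [set c; d] by rewrite -h set21.
have : b \in [set c; d] by rewrite -h set22.
have : d \in [set a; b] by rewrite h set22.
have : c \in [set a; b] by rewrite h set21.
rewrite !in_set2.
by do 4 (case/orP => /eqP ?); subst; auto.
Qed.

Lemma T_le_set0 (R : realFieldType) n (p : 'I_n -> R * R) : (n <= 1)%N -> T_le p 3 set0.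
Proof.
move=> n1.
have xy : forall x y : 'I_n, x = y.
  move=> x y; apply: ord_inj; have := ltn_ord x; have := ltn_ord y; lia.
split; first split.
- exact: sub0set.
- by move=> x y; rewrite (xy x y) connect0.
- move=> s us ss; exfalso.
  have := max_card (mem s); rewrite card_ord (card_uniqP us) => H.
  have H2 : (size s <= n)%N := H; lia.
- by move=> a b c d; rewrite in_set0.
- by move=> x y; exists [::]; rewrite (xy x y).
Qed.

Definition star n (w : 'I_n) : {set {set 'I_n}} := [set [set w; x] | x in [set~ w]].

Lemma T_le_star (R : realFieldType) n (p : 'I_n -> R * R) (w : 'I_n) : T_le p 3 (star w).
Proof.
have memS : forall x, x != w -> [set w; x] \in star w.
  by move=> x xw; apply/imsetP; exists x; rewrite ?in_setC1.
have hubw : forall x, x = w \/ adj (star w) w x.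
  by move=> x; case: (eqVneq x w) => [->|xw]; [left|right; exact: memS].
have conn : gconnected (star w).
  apply: (hub_conn (c := w)) => x; case: (hubw x) => [->|h]; [exact: connect0|exact: connect1].
split; first split => //.
- apply/subsetP => e /imsetP [x xw ->]; rewrite inE cards2; rewrite in_setC1 in xw.
  by rewrite eq_sym in xw; rewrite xw.
- apply: tree_of_conn => //; apply: leq_ltn_trans (leq_imset_card _ _) _.
  by rewrite cardsC1 card_ord prednK // (leq_ltn_trans (leq0n w) (ltn_ord w)).
- move=> a b c d /imsetP [x _ hx] /imsetP [y _ hy] /and5P [ab ac ad bc /andP [bd cd]].
  case: (set2_eq hx) => [[? ?]|[? ?]]; case: (set2_eq hy) => [[? ?]|[? ?]]; subst;
    by rewrite ?eqxx in ab ac ad bc bd cd.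
- move=> x y; apply: (step3 (b := w) (c := w)).
  + by case: (hubw x) => [->|h]; [left|right; rewrite adj_sym].
  + by left.
  + by case: (hubw y) => [->|h]; [left|right].
Qed.
Section Seg.
Local Open Scope ring_scope.
Lemma on_seg_sym (R : realFieldType) (x a b : R * R) : on_segment x a b -> on_segment x b a.
Proof.
case=> t [/andP [t0 t1] ->]; exists (1 - t); split.
  by apply/andP; split; rewrite ?subr_ge0 // lerBlDr lerDl.
by congr pair; ring.
Qed.
End Seg.

Lemma sm1 (R : realFieldType) (A B C D : R * R) : segments_meet A B C D -> segments_meet B A C D.
Proof. by case=> z [h1 h2]; exists z; split => //; apply: on_seg_sym. Qed.
Lemma sm2 (R : realFieldType) (A B C D : R * R) : segments_meet A B C D -> segments_meet A B D C.
Proof. by case=> z [h1 h2]; exists z; split => //; apply: on_seg_sym. Qed.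
Lemma sm3 (R : realFieldType) (A B C D : R * R) : segments_meet A B C D -> segments_meet C D A B.
Proof. by case=> z [h1 h2]; exists z; split. Qed.

Definition dX n (w v : 'I_n) (Y : {set 'I_n}) := [set x | [&& x \notin Y, x != w & x != v]].
Definition dstar n (w v : 'I_n) (Y : {set 'I_n}) : {set {set 'I_n}} :=
  [set [set w; v]] :|: [set [set w; x] | x in dX w v Y] :|: [set [set v; y] | y in Y].

Lemma dstar_cases n (w v : 'I_n) Y e : e \in dstar w v Y ->
  [\/ e = [set w; v], exists2 x, x \in dX w v Y & e = [set w; x] | exists2 y, y \in Y & e = [set v; y]].
Proof.
rewrite !in_setU in_set1 => /orP [/orP [/eqP ->|/imsetP [x xX ->]]|/imsetP [y yY ->]].
- by constructor 1.
- by constructor 2; exists x.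
- by constructor 3; exists y.
Qed.

Lemma dstar_T (R : realFieldType) n (p : 'I_n -> R * R) (w v : 'I_n) (Y : {set 'I_n}) :
  w != v -> w \notin Y -> v \notin Y ->
  (forall x y, x \in dX w v Y -> y \in Y -> ~ segments_meet (p w) (p x) (p v) (p y)) ->
  T_le p 3 (dstar w v Y).
Proof.
move=> wv wY vY H.
set X := dX w v Y; set D := dstar w v Y.
have mwv : adj D w v by rewrite /adj /D /dstar !in_setU set11.
have mwx : forall x, x \in X -> adj D w x.
  by move=> x xX; rewrite /adj /D /dstar !in_setU; apply/orP; left; apply/orP; right; apply/imsetP; exists x.
have mvy : forall y, y \in Y -> adj D v y.
  by move=> y yY; rewrite /adj /D /dstar !in_setU; apply/orP; right; apply/imsetP; exists y.
have Xi : forall x, x \in X = [&& x \notin Y, x != w & x != v] by move=> x; rewrite /X /dX inE.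
have cls : forall x, [\/ x = w, x = v, x \in X | x \in Y].
  move=> x; case: (boolP (x \in Y)) => xY; first by constructor 4.
  case: (eqVneq x w) => [->|xw]; first by constructor 1.
  case: (eqVneq x v) => [->|xv]; first by constructor 2.
  by constructor 3; rewrite Xi xY xw xv.
pose c x := if x \in Y then v else w.
have cx : forall x, x = c x \/ adj D x (c x).
  move=> x; rewrite /c; case: (cls x) => [->|->|xX|xY].
  - by rewrite (negbTE wY); left.
  - by rewrite (negbTE vY); right; rewrite adj_sym.
  - by move: (xX); rewrite Xi => /andP [/negbTE -> _]; right; rewrite adj_sym; apply: mwx.
  - by rewrite xY; right; rewrite adj_sym; apply: mvy.
have cc : forall x y, c x = c y \/ adj D (c x) (c y).
  move=> x y; rewrite /c; case: (x \in Y); case: (y \in Y); auto.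
    by right; rewrite adj_sym.
have conn : gconnected D.
  apply: (hub_conn (c := w)) => x; case: (cls x) => [->|->|xX|xY].
  - exact: connect0.
  - exact: connect1.
  - exact: connect1 (mwx _ xX).
  - by apply: connect_trans (connect1 mwv) (connect1 (mvy _ xY)).
have nwY : forall y, y \in Y -> v != y by move=> y yY; apply/eqP => vy; rewrite vy yY in vY.
split; first split => //.
- apply/subsetP => e /dstar_cases [->|[x xX ->]|[y yY ->]]; rewrite inE cards2 //.
  + by rewrite wv.
  + by rewrite Xi in xX; case/and3P: xX => _ xw _; rewrite eq_sym in xw; rewrite xw.
  + by rewrite nwY.
- apply: tree_of_conn => //.
  have c1 : (#|D| <= 1 + #|X| + #|Y|)%N.
    rewrite /D /dstar -/X.
    apply: leq_trans (leq_card_setU _ _).1 _; apply: leq_add; last exact: leq_imset_card.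
    apply: leq_trans (leq_card_setU _ _).1 _; rewrite cards1 leq_add2l; exact: leq_imset_card.
  have c2 : (#|X| + #|Y| + 2 <= n)%N.
    have XY0 : X :&: Y = set0.
      by apply/setP => x; rewrite inE Xi in_set0; case: (x \in Y); rewrite ?andbF.
    have XYs : X :|: Y \subset ~: [set w; v].
      apply/subsetP => x; rewrite in_setU Xi in_setC in_set2 => /orP [/and3P [_ xw xv]|xY]; first by rewrite negb_or xw xv.
      by apply/norP; split; apply/eqP => e; subst; rewrite xY in wY vY.
    have := cardsUI X Y; rewrite XY0 cards0 addn0 => h.
    have e3 := cardsC [set w; v]; rewrite cards2 wv card_ord in e3.
    rewrite -[X in (_ <= X)%N]e3 -h addnC leq_add2l; exact: subset_leq_card XYs.
  lia.
- move=> a b c' d /dstar_cases h1 /dstar_cases h2 /and5P [ab ac ad bc /andP [bd cd]].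
  case: h1 => [e1|[x xX e1]|[y yY e1]]; case: h2 => [e2|[x' xX' e2]|[y' yY' e2]];
  case: (set2_eq e1) => [[? ?]|[? ?]]; case: (set2_eq e2) => [[? ?]|[? ?]]; subst;
  rewrite ?eqxx in ab ac ad bc bd cd => //; move=> M;
  first [ apply: (H x y' xX yY') | apply: (H x' y xX' yY) ];
  first [ exact M | exact (sm1 M) | exact (sm2 M) | exact (sm1 (sm2 M))
        | exact (sm3 M) | exact (sm1 (sm3 M)) | exact (sm2 (sm3 M)) | exact (sm1 (sm2 (sm3 M))) ].
- move=> x y; apply: (step3 (b := c x) (c := c y)).
  + exact: cx.
  + exact: cc.
  + by case: (cx y) => [<-|h]; [left|right; rewrite adj_sym].
Qed.
Section Ang.
Local Open Scope ring_scope.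
Lemma ang_trans (R : realFieldType) (e : R) (W W' A B C : R * R) : e * e = 1 ->
  0 < e * orient W W' A -> 0 < e * orient W W' B -> 0 < e * orient W W' C ->
  0 < e * orient W A B -> 0 < e * orient W B C -> 0 < e * orient W A C.
Proof.
move=> ee hA hB hC hAB hBC.
have I : (e * orient W W' B) * (e * orient W A C) =
   (e * orient W W' A) * (e * orient W B C) + (e * orient W W' C) * (e * orient W A B).
  have -> : (e * orient W W' B) * (e * orient W A C) = (e * e) * (orient W W' B * orient W A C) by ring.
  have -> : (e * orient W W' A) * (e * orient W B C) + (e * orient W W' C) * (e * orient W A B)
     = (e * e) * (orient W W' A * orient W B C + orient W W' C * orient W A B) by ring.
  by congr (_ * _); rewrite /orient; ring.
have : 0 < (e * orient W W' B) * (e * orient W A C).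
  by rewrite I addr_gt0 // mulr_gt0.
by rewrite pmulr_rgt0.
Qed.

Lemma orient_xx (R : realFieldType) (a b : R * R) : orient a b b = 0.
Proof. by rewrite /orient; ring. Qed.
Lemma orient_xx' (R : realFieldType) (a b : R * R) : orient a b a = 0.
Proof. by rewrite /orient; ring. Qed.
Lemma orient_xx'' (R : realFieldType) (a b : R * R) : orient a a b = 0.
Proof. by rewrite /orient; ring. Qed.
End Ang.

Lemma pinj (R : realFieldType) n (p : 'I_n -> R * R) : general_position p ->
  forall i j k, i != j -> k != i -> k != j -> p i <> p j.
Proof.
move=> gp i j k ij ki kj e; have := gp i j k ij; rewrite eq_sym kj eq_sym ki => /(_ isT isT).
by rewrite e orient_xx'' eqxx.
Qed.
Lemma handshake n (B : {set {set 'I_n}}) : B \subset complete_edges n ->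
  \sum_(u : 'I_n) #|[set e in B | u \in e]| = #|B| * 2.
Proof.
move=> hB.
have h1 : forall u, #|[set e in B | u \in e]| = \sum_(e in B) (u \in e : nat).
  move=> u; rewrite -sum1_card.
  rewrite (eq_bigl (fun e => (e \in B) && (u \in e))); last by move=> e; rewrite inE.
  by rewrite big_mkcondr /=; apply: eq_bigr => e _; case: (u \in e).
rewrite (eq_bigr _ (fun u _ => h1 u)) exchange_big /= -sum_nat_const.
apply: eq_bigr => e eB.
have : e \in complete_edges n by apply: (subsetP hB).
rewrite inE => /eqP <-; rewrite -sum1_card [RHS]big_mkcond /=.
by apply: eq_bigr => u _; case: (u \in e).
Qed.

Lemma edge2 n (B : {set {set 'I_n}}) x y : B \subset complete_edges n -> [set x; y] \in B -> x != y.
Proof.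
move=> hB /(subsetP hB); rewrite inE cards2; by case: (x != y).
Qed.

Lemma leaf_ex n (B : {set {set 'I_n}}) : B \subset complete_edges n ->
  (forall u, exists2 e, e \in B & u \in e) -> (#|B| < n)%N ->
  exists w w', [/\ w != w', [set w; w'] \in B & forall x, adj B w x -> x = w'].
Proof.
move=> hB cov hn.
case: (boolP [exists u, #|[set e in B | u \in e]| <= 1]%N) => [/existsP [u hu]|].
  have : [set e in B | u \in e] != set0.
    by have [e eB ue] := cov u; apply/set0Pn; exists e; rewrite inE eB ue.
  rewrite -card_gt0 => h0.
  have /cards1P [e0 he0] : #|[set e in B | u \in e]| == 1%N by rewrite eqn_leq hu h0.
  have : e0 \in [set e in B | u \in e] by rewrite he0 set11.
  rewrite inE => /andP [e0B ue0].
  have := subsetP hB _ e0B; rewrite inE => /cards2P [a [b [ab e0e]]].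
  have [w' [uw' ew']] : exists w', u != w' /\ e0 = [set u; w'].
    move: ue0; rewrite e0e in_set2 => /orP [/eqP ->|/eqP ->].
      by exists b.
    by exists a; rewrite eq_sym ab setUC.
  exists u, w'; split => //; first by rewrite -ew'.
  move=> x ux.
  have : [set u; x] \in [set e in B | u \in e] by rewrite inE set21 andbT; exact: ux.
  rewrite he0 in_set1 ew' => /eqP h.
  have : x \in [set u; w'] by rewrite -h set22.
  rewrite in_set2 => /orP [/eqP xu|/eqP //].
  by have := edge2 hB ux; rewrite xu eqxx.
rewrite negb_exists => /forallP hall.
have : (\sum_(u : 'I_n) 2 <= \sum_(u : 'I_n) #|[set e in B | u \in e]|)%N.
  by apply: leq_sum => u _; have := hall u; rewrite -ltnNge.
rewrite handshake // sum_nat_const card_ord.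
rewrite leq_pmul2r // => h; by have := leq_ltn_trans h hn; rewrite ltnn.
Qed.
Unset Implicit Arguments.
Set Strict Implicit.
Theorem proposition2 (R : realFieldType) (n : nat) (p : 'I_n -> R * R)
  (hgp : general_position p) (B : {set {set 'I_n}}) :
  is_blocker (T_le p 3) B -> spanning_tree B.
Proof.
case=> hB hbl hmin.
case: (leqP n 1) => [n1|n2].
  by have [e [_]] := hbl _ (T_le_set0 p n1); rewrite in_set0.
have cov : forall u, exists2 e, e \in B & u \in e.
  move=> u; have [e [eB eS]] := hbl _ (T_le_star p u).
  by exists e => //; move: eS => /imsetP [x _ ->]; exact: set21.
have hn : (#|B| < n)%N.
  pose w0 : 'I_n := Ordinal (ltnW n2); pose w1 : 'I_n := Ordinal n2.
  have [[ss _ _] _ _] := T_le_star p w0.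
  have bl : blocks (T_le p 3) (star w0).
    move=> T [[sT cT _] _ _].
    have /connectP [q pq lq] := cT w0 w1.
    case: q pq lq => [|y q] /=; first by move=> _ /(congr1 val).
    case/andP => ay _ _; exists [set w0; y]; split => //.
    apply/imsetP; exists y => //; rewrite in_setC1 eq_sym; exact: (edge2 sT ay).
  have := hmin _ ss bl; move/leq_ltn_trans; apply.
  apply: leq_ltn_trans (leq_imset_card _ _) _.
  by rewrite cardsC1 card_ord ltn_predL (ltnW n2).
have conn : gconnected B.
  move=> a0 b0; case: (boolP (connect (adj B) a0 b0)) => // nxy; exfalso.
  have [w [w' [ww' ew' leaf]]] := leaf_ex hB cov hn.
  pose C := [set u | connect (adj B) w u].
  have Ci : forall u, (u \in C) = connect (adj B) w u by move=> u; rewrite inE.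
  have [v0 v0C] : exists v0, v0 \notin C.
    case: (boolP (a0 \in C)) => xC; last by exists a0.
    exists b0; apply/negP; rewrite Ci => wy; move: xC; rewrite Ci => wx.
    by move: nxy; rewrite (connect_trans _ wy) // conn_sym.
  have wC : w \in C by rewrite Ci connect0.
  have w'C : w' \in C by rewrite Ci connect1.
  have neqC : forall a b, a \in C -> b \notin C -> a != b.
    by move=> a b aC bC; apply/eqP => ab; rewrite -ab aC in bC.
  pose o u := orient (p w) (p w') (p u).
  have o0 : forall u, u \notin C -> (o u != 0)%R.
    move=> u uC; apply: hgp => //; [exact: neqC w'C uC | exact: neqC wC uC].
  pose eps : R := if [exists u, (u \notin C) && (0 < o u)%R] then 1%R else (-1)%R.
  have ee : (eps * eps = 1)%R by rewrite /eps; case: ifP => _; rewrite ?mulr1 ?mulrNN ?mulr1.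
  have eps0 : eps != 0%R by apply/eqP => e0; move: ee; rewrite e0 mulr0 => /eqP; rewrite eq_sym oner_eq0.
  pose S' := [set u | (u \notin C) && (0 < eps * o u)%R].
  have [v1 v1S] : exists v1, v1 \in S'.
    rewrite /S' /eps; case: ifP => [/existsP [u /andP [uC ou]]|/negbT].
      by exists u; rewrite inE uC mul1r.
    rewrite negb_exists => /forallP /(_ v0); rewrite v0C /= => nv.
    exists v0; rewrite inE v0C /= mulN1r oppr_gt0.
    by have := lt_total (o0 _ v0C); rewrite (negbTE nv) orbF.
  pose bef u v := (0 < eps * orient (p w) (p u) (p v))%R.
  pose cnt v := #|[set u in S' | bef u v]|.
  have [v vS vmin] : extremum_spec leq (fun i => i \in S') cnt [arg min_(v < v1 in S') cnt v].
    exact: arg_minnP.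
  have Si : forall u, u \in S' -> (u \notin C) /\ (0 < eps * o u)%R.
    by move=> u; rewrite inE => /andP.
  have nobef : forall u, u \in S' -> ~~ bef u v.
    move=> u uS; apply/negP => buv.
    have : [set u' in S' | bef u' u] \proper [set u' in S' | bef u' v].
      apply/properP; split.
      - apply/subsetP => u'; rewrite !inE => /andP [u'S bu'u]; rewrite u'S /=.
        exact: (ang_trans (W' := p w') ee (elimT andP u'S).2 (Si _ uS).2 (Si _ vS).2 bu'u buv).
      - exists u; rewrite !inE; [by move: uS; rewrite !inE => -> | by rewrite /bef orient_xx mulr0 ltxx andbF].
    move/proper_card; rewrite /cnt in vmin; have := vmin u uS.
    by move=> h1 h2; have := leq_trans h2 h1; rewrite ltnn.
  pose Y := w' |: [set y | (0 < eps * o y)%R && bef y v].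
  have YC : forall y, y \in Y -> y \in C.
    move=> y; rewrite in_setU1 => /orP [/eqP -> // |]; rewrite inE => /andP [oy byv].
    apply/negPn/negP => yC; have := nobef y; rewrite inE yC oy /= => /(_ isT).
    by rewrite byv.
  have [vC _] := Si _ vS.
  have wY : w \notin Y.
    rewrite in_setU1 (negbTE ww') /= inE /o orient_xx' mulr0 ltxx //.
  have vY : v \notin Y by apply/negP => /YC; rewrite (negbTE vC).
  have wv : w != v by exact: neqC wC vC.
  have w'v : w' != v by exact: neqC w'C vC.
  have TT : T_le p 3 (dstar w v Y).
    apply: dstar_T => // x y; rewrite inE => /and3P [xY xw xv] yY.
    have wy : w != y by apply/eqP => wy; rewrite wy yY in wY.
    have vy : v != y by apply/eqP => vy; rewrite vy yY in vY.
    have [ny ho hb] : [/\ (0 <= eps * o y)%R, (0 < eps * orient (p w) (p y) (p v))%R & True].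
      move: yY; rewrite in_setU1 => /orP [/eqP ->|]; first by rewrite /o orient_xx mulr0 lexx (Si _ vS).2.
      by rewrite inE => /andP [oy byv]; split => //; apply: ltW.
    apply: (key_noncross (e := eps) (W' := p w')).
    - exact: (Si _ vS).2.
    - exact: ny.
    - exact: ho.
    - have xw' : x != w' by apply/eqP => xw'; rewrite xw' in_setU1 eqxx in xY.
      have ox : (eps * o x != 0)%R.
        rewrite mulf_neq0 //; apply: hgp => //; rewrite eq_sym //; exact: ww'.
      have bx : (eps * orient (p w) (p x) (p v) != 0)%R.
        rewrite mulf_neq0 //; apply: hgp => //; rewrite eq_sym //.
      move: xY; rewrite in_setU1 (negbTE xw') /= inE negb_and /bef => /orP [nx|nx].
        by left; have := lt_total ox; rewrite (negbTE nx) orbF.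
      by right; have := lt_total bx; rewrite (negbTE nx) orbF.
    - by apply: (@pinj R n p hgp w y v wy) => //; rewrite eq_sym.
    - by apply: (@pinj R n p hgp w v w' wv) => //; rewrite eq_sym.
  have [e [eB eT]] := hbl _ TT.
  case: (dstar_cases eT) => [e1|[x' xX e1]|[y' yY e1]]; subst e.
  - by move: vC; rewrite Ci (connect1 eB).
  - have := leaf x' eB => xw'; move: xX; rewrite inE xw' in_setU1 eqxx //.
  - move: vC; rewrite Ci; have := YC _ yY; rewrite Ci => wy.
    by rewrite (connect_trans wy) // connect1 // adj_sym.
split => //; exact: tree_of_conn conn hn.
Qed.
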